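(* Let $p$ be an odd prime and $m,r$ positive integers. Then $S_{mp^r+1}\equiv 4(mp^r+1)S_{mp^{r-1}}\pmod{p^{2r}}$.
   Context: $(S_n)_{n\ge0}$ is the integer sequence defined by $S_0=1$, $S_1=4$ and $(n+1)^2S_{n+1}=4(3n^2+3n+1)S_n-32n^2S_{n-1}$ for $n\ge1$; equivalently $S_n=\sum_{k=0}^n\binom nk\binom{2k}k\binom{2n-2k}{n-k}$. *)

(* Defs.v *)
From mathcomp Require Import all_boot.
Set Implicit Arguments. Unset Strict Implicit. Unset Printing Implicit Defensive.

Definition S (n : nat) : nat :=
  \sum_(0 <= k < n.+1) 'C(n, k) * 'C(k.*2, k) * 'C((n - k).*2, n - k).

(* Main.v *)
Require Import Defs.
From mathcomp Require Import all_boot all_order all_algebra.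
From mathcomp Require Import ring lra zify.
Set Implicit Arguments. Unset Strict Implicit. Unset Printing Implicit Defensive.
Import GRing.Theory Num.Theory.

Definition T (n k : nat) : nat := 'C(n, k) * 'C(k.*2, k) * 'C((n - k).*2, n - k).
Definition FF (p x : nat) : nat := \prod_(i < x) \prod_(j < p.-1) (p * i + j.+1).

Lemma fact_add n m : (n + m)`! = n`! * \prod_(j < m) (n + j.+1).
Proof.
elim: m => [|m IH]; first by rewrite addn0 big_ord0 muln1.
rewrite addnS factS IH big_ord_recr /= -addnS; ring.
Qed.

Lemma fact_FF p x : 0 < p -> (p * x)`! = p ^ x * x`! * FF p x.
Proof.
move=> p0; elim: x => [|x IH]; first by rewrite muln0 /FF big_ord0.
rewrite mulnS addnC fact_add IH /FF big_ord_recr /=.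
have -> : p = (p.-1).+1 by rewrite prednK.
rewrite big_ord_recr /= -/(p.-1.+1) prednK //.
have -> : p * x + p = p * x.+1 by rewrite mulnS addnC.
rewrite factS expnS; ring.
Qed.

Lemma FF_coprime p x : prime p -> coprime p (FF p x).
Proof.
move=> pp; rewrite /FF; elim/big_ind: _ => [|u v hu hv|i _]; [exact: coprimen1|by rewrite coprimeMr hu hv|].
elim/big_ind: _ => [|u v hu hv|j _]; [exact: coprimen1|by rewrite coprimeMr hu hv|].
rewrite prime_coprime // dvdn_addr ?dvdn_mulr //.
have jp : j.+1 < p by have := ltn_ord j; have := prime_gt1 pp; lia.
by rewrite gtnNdvd.
Qed.

Lemma FF_gt0 p x : prime p -> 0 < FF p x.
Proof.
move=> pp; rewrite /FF prodn_gt0 // => i; rewrite prodn_gt0 // => j; by rewrite addnS.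
Qed.

Lemma B1 p a b : prime p ->
  'C(p * (a + b), p * a) * FF p a * FF p b = 'C(a + b, a) * FF p (a + b).
Proof.
move=> pp; have p0 := prime_gt0 pp.
have H1 := bin_fact (leq_addr b a).
have H2 : p * a <= p * (a + b) by rewrite leq_mul2l leq_addr orbT.
have H3 := bin_fact H2.
rewrite -mulnBr addKn in H3; rewrite addKn in H1.
rewrite !fact_FF // -H1 in H3.
apply/eqP; rewrite -(@eqn_pmul2l (p ^ (a + b) * (a`! * b`!))); last first.
  by rewrite muln_gt0 expn_gt0 p0 muln_gt0 !fact_gt0.
apply/eqP; rewrite expnD in H3 *.
transitivity ('C(p * (a + b), p * a) * (p ^ a * a`! * FF p a * (p ^ b * b`! * FF p b))); first by ring.
by rewrite H3; ring.
Qed.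

Lemma Cc m : m.+1 * 'C(m.+1.*2, m.+1) = 2 * (m.*2.+1) * 'C(m.*2, m).
Proof.
have H1 := mul_bin_diag (m.+1.*2) m.
have H2 := mul_bin_down (m.*2.+1) m.
have e1 : (m.+1.*2).-1 = m.*2.+1 by rewrite doubleS.
have e2 : m.*2.+1 - m = m.+1 by rewrite -addnn -addSn addnK.
rewrite e1 in H1; rewrite /= e2 in H2.
apply/eqP; rewrite -(@eqn_pmul2l m.+1) //; apply/eqP.
rewrite -H1.
transitivity (m.+1.*2 * (m.+1 * 'C(m.*2.+1, m))); first by ring.
rewrite -H2 doubleS -!mul2n; ring.
Qed.

Lemma I1 n k : k <= n ->
  T n.+1 k * (n.+1 - k) ^ 2 = T n k * n.+1 * (2 * ((n - k).*2.+1)).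
Proof.
move=> kn; rewrite /T subSn //.
have H1 := mul_bin_down n.+1 k; rewrite /= subSn // in H1.
have H2 := Cc (n - k).
rewrite -[(n-k).+1 ^ 2]mulnn.
transitivity ((n - k).+1 * 'C(n.+1, k) * 'C(k.*2, k) * ((n - k).+1 * 'C((n - k).+1.*2, (n - k).+1)));
  first by ring.
by rewrite -H1 H2; ring.
Qed.

Lemma I2 n k : k <= n ->
  T n.+1 k.+1 * k.+1 ^ 2 = T n k * n.+1 * (2 * (k.*2.+1)).
Proof.
move=> kn; rewrite /T subSS.
have H1 := mul_bin_diag n.+1 k; rewrite /= in H1.
have H2 := Cc k.
rewrite -[k.+1 ^ 2]mulnn.
transitivity (k.+1 * 'C(n.+1, k.+1) * (k.+1 * 'C(k.+1.*2, k.+1)) * 'C((n - k).*2, n - k));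
  first by ring.
by rewrite -H1 H2; ring.
Qed.

Lemma Tscale p N a : prime p -> a <= N ->
  T (p * N) (p * a) * (FF p a ^ 3 * FF p (N - a) ^ 3) =
  T N a * (FF p N * FF p (a + a) * FF p ((N - a) + (N - a))).
Proof.
move=> pp aN; rewrite /T -mulnBr -!muln2 -!mulnA.
set b := N - a.
have eN : N = a + b by rewrite /b subnKC.
have Ha := B1 a a pp; have Hb := B1 b b pp; have Hab := B1 a b pp.
rewrite -eN in Hab.
rewrite !mulnDr in Ha Hb.
rewrite !muln2 -!addnn !mulnDr.
transitivity (('C(p * N, p * a) * FF p a * FF p b) * ('C(p * a + p * a, p * a) * FF p a * FF p a)
   * ('C(p * b + p * b, p * b) * FF p b * FF p b)); first by ring.
by rewrite Hab Ha Hb; ring.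
Qed.

Lemma sum_ext p n M : prime p -> n < M ->
  \sum_(1 <= k < n.+1) n %/ p ^ k = \sum_(1 <= k < M) n %/ p ^ k.
Proof.
move=> pp nM; rewrite [RHS](big_cat_nat _ (n := n.+1)) //=.
rewrite [X in _ = _ + X]big_nat_cond [X in _ = _ + X]big1 ?addn0 // => k /andP[/andP[hk _] _].
apply: divn_small; apply: (leq_trans hk); apply: ltnW; apply: ltn_expl.
exact: prime_gt1.
Qed.

Lemma logC2 p x M : prime p -> x.*2 < M ->
  logn p 'C(x.*2, x) + 2 * \sum_(1 <= k < M) x %/ p ^ k = \sum_(1 <= k < M) x.*2 %/ p ^ k.
Proof.
move=> pp xM.
have xx : x <= x.*2 by rewrite -addnn leq_addr.
have H := bin_fact xx.
have e : x.*2 - x = x by rewrite -addnn addnK.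
rewrite e in H.
rewrite -!sum_ext //; last by apply: leq_ltn_trans xM.
rewrite -!logn_fact // -H !lognM ?fact_gt0 ?bin_gt0 //; first by lia.
by rewrite muln_gt0 !fact_gt0.
Qed.

Lemma div2_le a q : 0 < q -> 2 * (a %/ q) <= a.*2 %/ q.
Proof.
move=> q0; rewrite leq_divRL // -mul2n -mulnA leq_mul2l /=.
exact: leq_trunc_div.
Qed.

Lemma div2_mid a b q : 0 < q -> q %| a + b -> ~~ (q %| a) ->
  2 * (a %/ q) + 2 * (b %/ q) + 1 <= a.*2 %/ q + b.*2 %/ q.
Proof.
move=> q0 hab ha.
have ea : a.*2 = (2 * (a %/ q)) * q + (a %% q).*2.
  by rewrite {1}(divn_eq a q) -!mul2n; ring.
have eb : b.*2 = (2 * (b %/ q)) * q + (b %% q).*2.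
  by rewrite {1}(divn_eq b q) -!mul2n; ring.
rewrite ea eb !divnMDl //.
have al0 : 0 < a %% q by rewrite lt0n.
have alq : a %% q < q by rewrite ltn_mod.
have blq : b %% q < q by rewrite ltn_mod.
have hs : (a %% q + b %% q) %% q = 0.
  by rewrite modnDm; apply/eqP.
have hsq : a %% q + b %% q = q.
  have := divn_eq (a %% q + b %% q) q; rewrite hs addn0.
  set c := (_ %/ q) => hc.
  have c1 : c = 1.
    have : c * q < 2 * q by rewrite -hc; lia.
    rewrite ltn_pmul2r // => c2.
    have : 0 < c * q by rewrite -hc; lia.
    rewrite muln_gt0 => /andP[c0 _]; lia.
  by rewrite hc c1 mul1n.
suff : 1 <= (a %% q).*2 %/ q + (b %% q).*2 %/ q by lia.
case: (leqP q (a %% q).*2) => h.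
  have h1 : 1 <= (a %% q).*2 %/ q by rewrite leq_divRL // mul1n.
  exact: leq_trans h1 (leq_addr _ _).
have h1 : 1 <= (b %% q).*2 %/ q by rewrite leq_divRL // mul1n; lia.
exact: leq_trans h1 (leq_addl _ _).
Qed.

Lemma sum_mid p a b K t M : prime p -> t < K -> K < M ->
  p ^ K %| a + b -> ~~ (p ^ t.+1 %| a) ->
  (K - t) + (\sum_(1 <= k < M) (2 * (a %/ p ^ k)) + \sum_(1 <= k < M) (2 * (b %/ p ^ k)))
  <= \sum_(1 <= k < M) (a.*2 %/ p ^ k) + \sum_(1 <= k < M) (b.*2 %/ p ^ k).
Proof.
move=> pp tK KM hab ha.
rewrite -!big_split.
have q0 k : 0 < p ^ k by rewrite expn_gt0 prime_gt0.
rewrite !(big_cat_nat _ (n := t.+1) (m := 1) (p := M)) //=; try lia.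
rewrite !(big_cat_nat _ (n := K.+1) (m := t.+1) (p := M)) //=; try lia.
have L1 : forall m n, \sum_(m <= k < n) (2 * (a %/ p ^ k) + 2 * (b %/ p ^ k))
   <= \sum_(m <= k < n) (a.*2 %/ p ^ k + b.*2 %/ p ^ k).
  by move=> m n; apply: leq_sum => k _; apply: leq_add; apply: div2_le.
have L2 : (K - t) + \sum_(t.+1 <= k < K.+1) (2 * (a %/ p ^ k) + 2 * (b %/ p ^ k))
   <= \sum_(t.+1 <= k < K.+1) (a.*2 %/ p ^ k + b.*2 %/ p ^ k).
  have -> : K - t = \sum_(t.+1 <= k < K.+1) 1 by rewrite sum_nat_const_nat muln1 subSS.
  rewrite -big_split /= big_nat_cond [X in _ <= X]big_nat_cond; apply: leq_sum => k /andP[/andP[hk1 hk2] _].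
  rewrite addnC; apply: div2_mid => //.
    by apply: dvdn_trans hab; rewrite dvdn_exp2l.
  apply: contra ha => hk; apply: dvdn_trans hk; by rewrite dvdn_exp2l.
have := L1 1 t.+1; have := L1 K.+1 M; lia.

Qed.

Lemma LC p a b K t : prime p -> p ^ K %| a + b -> ~~ (p ^ t.+1 %| a) ->
  p ^ (K - t) %| 'C(a.*2, a) * 'C(b.*2, b).
Proof.
move=> pp hab ha.
have ca : 0 < 'C(a.*2, a) by rewrite bin_gt0 -addnn leq_addr.
have cb : 0 < 'C(b.*2, b) by rewrite bin_gt0 -addnn leq_addr.
case: (leqP K t) => hKt; first by have -> : K - t = 0 by lia.
rewrite pfactor_dvdn ?muln_gt0 ?ca // lognM //.
set M := (a.*2 + b.*2 + K).+1.
have Ha := @logC2 p a M pp ltac:(lia).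
have Hb := @logC2 p b M pp ltac:(lia).
have Hs := sum_mid (M := M) pp hKt ltac:(lia) hab ha.
have Da : \sum_(1 <= k < M) 2 * (a %/ p ^ k) = 2 * \sum_(1 <= k < M) (a %/ p ^ k)
  by rewrite big_distrr.
have Db : \sum_(1 <= k < M) 2 * (b %/ p ^ k) = 2 * \sum_(1 <= k < M) (b %/ p ^ k)
  by rewrite big_distrr.
rewrite Da Db in Hs.
lia.
Qed.

Lemma binV p n a K t : prime p -> p ^ K %| n -> ~~ (p ^ t.+1 %| a) ->
  p ^ (K - t) %| 'C(n, a).
Proof.
move=> pp hn ha.
case: a ha => [|a] ha; first by rewrite dvdn0 in ha.
case: (posnP 'C(n, a.+1)) => [->|c0]; first exact: dvdn0.
have H := mul_bin_diag n a.
have : p ^ K %| a.+1 * 'C(n, a.+1) by rewrite -H; apply: dvdn_mulr.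
rewrite !pfactor_dvdn ?muln_gt0 ?c0 // lognM //.
rewrite pfactor_dvdn // in ha.
lia.
Qed.

Lemma TV p n a K t : prime p -> p ^ K %| n -> ~~ (p ^ t.+1 %| a) -> a <= n ->
  p ^ ((K - t) * 2) %| T n a.
Proof.
move=> pp hn ha an.
rewrite /T -mulnA muln2 -addnn expnD; apply: dvdn_mul; first exact: binV hn ha.
apply: LC => //; by rewrite subnKC.
Qed.

Section Part6.
Local Open Scope ring_scope.

Definition Expd (h : int -> int) :=
  exists E : int, forall z : int, exists R : int, h z = h 0 + z * E + z ^+ 2 * R.

Lemma Expd_mul f g : Expd f -> Expd g -> Expd (fun z => f z * g z).
Proof.
move=> [E1 H1] [E2 H2]; exists (f 0 * E2 + g 0 * E1) => z.
have [R1 e1] := H1 z; have [R2 e2] := H2 z.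
exists (f 0 * R2 + E1 * E2 + z * E1 * R2 + R1 * (g 0 + z * E2 + z ^+ 2 * R2)).
rewrite e1 [in LHS]e2; ring.
Qed.

Lemma Expd_ext f g : (forall z, f z = g z) -> Expd f -> Expd g.
Proof.
move=> fg [E H]; exists E => z; have [R e] := H z; exists R.
by rewrite -!fg e.
Qed.

Lemma Expd_lin c : Expd (fun z => z + c).
Proof. by exists 1 => z; exists 0; ring. Qed.

Lemma Expd_prod n (h : nat -> int -> int) : (forall i, Expd (h i)) ->
  Expd (fun z => \prod_(i < n) h i z).
Proof.
move=> hE; elim: n => [|n IH].
  by exists 0 => z; exists 0; rewrite !big_ord0; ring.
have := Expd_mul IH (hE n).
by apply: Expd_ext => z; rewrite big_ord_recr.
Qed.

End Part6.

Section Part7.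
Local Open Scope ring_scope.

Definition PP (p b : nat) (z : int) : int :=
  \prod_(i < b) \prod_(j < p.-1) (z + (p * i + j.+1)%N%:Z).

Lemma PP_Expd p b : Expd (PP p b).
Proof.
rewrite /PP; apply: (@Expd_prod b (fun i z => \prod_(j < p.-1) (z + (p * i + j.+1)%N%:Z))) => i.
apply: (@Expd_prod p.-1 (fun j z => (z + (p * i + j.+1)%N%:Z))) => j; exact: Expd_lin.
Qed.

Lemma PP_sym p b : odd p -> PP p b (- (p * b)%N%:Z) = PP p b 0.
Proof.
move=> op; rewrite /PP [LHS](reindex_inj rev_ord_inj) /=.
apply: eq_bigr => i _.
rewrite [LHS](reindex_inj rev_ord_inj) /=.
have -> : \prod_(j < p.-1) (- (p * b)%N%:Z + (p * (b - i.+1) + (p.-1 - j.+1).+1)%N%:Z)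
   = \prod_(j < p.-1) (-1 * (0 + (p * i + j.+1)%N%:Z)).
  apply: eq_bigr => j _.
  have hi := ltn_ord i; have hj := ltn_ord j.
  have p0 : (0 < p)%N by rewrite lt0n; apply: contraTneq op => ->.
  have hn : (p * (b - i.+1) + (p.-1 - j.+1).+1 + (p * i + j.+1) = p * b)%N.
    have hb : b = ((b - i.+1) + i.+1)%N by rewrite subnK.
    rewrite [in RHS]hb mulnDr mulnS; lia.
  rewrite -[(p * b)%N]hn !PoszD; ring.
rewrite big_split /= prodr_const card_ord -signr_odd.
have p0 : (0 < p)%N by rewrite lt0n; apply: contraTneq op => ->.
have -> : odd p.-1 = false by move: op; rewrite -{1}(prednK p0) /= => /negPf.
by rewrite expr0 mul1r.
Qed.

End Part7.

Section Part8.
Local Open Scope ring_scope.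

Lemma Posz_prod I (r : seq I) (P : pred I) (F : I -> nat) :
  (\prod_(i <- r | P i) F i)%N%:Z = \prod_(i <- r | P i) (F i)%:Z.
Proof. by rewrite -natz natr_prod; apply: eq_bigr => i _; rewrite natz. Qed.

Lemma FF_split p a b : (FF p (a + b) = FF p a * \prod_(i < b) \prod_(j < p.-1) (p * (a + i) + j.+1))%N.
Proof. by rewrite /FF big_split_ord. Qed.

Lemma J p a b t : prime p -> odd p -> (p ^ t %| a)%N -> (p ^ t %| b)%N ->
  ((p ^ t.*2.+2)%N%:Z %| (FF p (a + b))%:Z - (FF p a)%:Z * (FF p b)%:Z)%Z.
Proof.
move=> pp op ha hb.
case: (posnP b) => [->|b0].
  by rewrite addn0 /FF big_ord0 mulr1 subrr dvdz0.
have e0 : (FF p b)%:Z = PP p b 0.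
  rewrite /FF /PP Posz_prod; apply: eq_bigr => i _; rewrite Posz_prod.
  by apply: eq_bigr => j _; rewrite add0r.
have ea : (\prod_(i < b) \prod_(j < p.-1) (p * (a + i) + j.+1))%N%:Z = PP p b (p * a)%N%:Z.
  rewrite /PP Posz_prod; apply: eq_bigr => i _; rewrite Posz_prod.
  by apply: eq_bigr => j _; rewrite -PoszD mulnDr addnA.
have [E HE] := PP_Expd p b.
have [R1 e1] := HE (- (p * b)%N%:Z).
have [R2 e2] := HE ((p * a)%N%:Z).
rewrite PP_sym // in e1.
have hE : E = (p * b)%N%:Z * R1.
  have pb0 : (p * b)%N%:Z != 0 by rewrite eqz_nat muln_eq0 negb_or -!lt0n b0 prime_gt0.
  apply: (mulfI pb0); apply/eqP; rewrite -subr_eq0; apply/eqP.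
  have h0 := congr1 (fun x => x - PP p b 0) e1; rewrite /= subrr in h0.
  transitivity (- (PP p b 0 + - (p * b)%N%:Z * E + (- (p * b)%N%:Z) ^+ 2 * R1 - PP p b 0)).
    ring.
  by rewrite -h0 oppr0.
rewrite FF_split PoszM ea e2 e0 hE.
have ep : (p ^ t.*2.+2)%N%:Z = ((p%:Z) ^+ t) ^+ 2 * (p%:Z) ^+ 2.
  by rewrite -natz natrX -addn2 -muln2 exprD exprM natz.
rewrite ep.
have [a' ea'] := dvdnP ha; have [b' eb'] := dvdnP hb.
apply/dvdzP; exists ((FF p a)%:Z * (a'%:Z * b'%:Z * R1 + a'%:Z ^+ 2 * R2)).
rewrite ea' eb' !PoszM -!natz !natrX; ring.
Qed.

End Part8.

Section Part9.
Local Open Scope ring_scope.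

Lemma dvdzN' d x : (d %| - x)%Z = (d %| x)%Z.
Proof. by rewrite !dvdzE abszN. Qed.

Lemma dvdzD' d x y : (d %| x)%Z -> (d %| y)%Z -> (d %| x + y)%Z.
Proof. move=> hx hy; exact: rpredD. Qed.

Definition cgz (M : nat) (x y : int) := (M%:Z %| x - y)%Z.

Lemma cgz_refl M x : cgz M x x.
Proof. by rewrite /cgz subrr dvdz0. Qed.

Lemma cgz_sym M x y : cgz M x y -> cgz M y x.
Proof. by rewrite /cgz -opprB dvdzN'. Qed.

Lemma cgz_trans M x y z : cgz M x y -> cgz M y z -> cgz M x z.
Proof.
rewrite /cgz => h1 h2; have -> : x - z = (x - y) + (y - z) by ring.
exact: dvdzD'.
Qed.

Lemma cgz_add M x y u v : cgz M x y -> cgz M u v -> cgz M (x + u) (y + v).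
Proof.
rewrite /cgz => h1 h2; have -> : x + u - (y + v) = (x - y) + (u - v) by ring.
exact: dvdzD'.
Qed.

Lemma cgz_mull M c x y : cgz M x y -> cgz M (c * x) (c * y).
Proof.
rewrite /cgz => h; have -> : c * x - c * y = c * (x - y) by ring.
exact: dvdz_mull.
Qed.

Lemma cgz_0 M x : (M%:Z %| x)%Z -> cgz M x 0.
Proof. by rewrite /cgz subr0. Qed.

Lemma cgz_sum M m n (F G : nat -> int) :
  (forall i, (m <= i < n)%N -> cgz M (F i) (G i)) ->
  cgz M (\sum_(m <= i < n) F i) (\sum_(m <= i < n) G i).
Proof.
move=> h; rewrite /cgz -sumrB big_nat_cond.
elim/big_ind: _ => [|u v hu hv|i /andP[hi _]]; first exact: dvdz0.
  exact: dvdzD'.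
exact: h.
Qed.

Lemma cgz_cancel p e c x y : prime p -> coprime p c ->
  cgz (p ^ e) (c%:Z * x) (c%:Z * y) -> cgz (p ^ e) x y.
Proof.
move=> pp pc; rewrite /cgz -mulrBr dvdzE abszM /=.
by rewrite Gauss_dvdr // coprimeXl.
Qed.

Lemma Gstep p s u c n X Y : prime p -> (p %| c)%N ->
  ((c.+1) ^ 2 * X = Y * n.+1 * (2 * (c.*2.+1)))%N ->
  (p ^ s %| Y)%N -> (p ^ u %| c)%N ->
  cgz (p ^ (s + u * 2)) X%:Z (2 * n.+1%:Z * Y%:Z).
Proof.
move=> pp pc hX hY hc.
apply: (@cgz_cancel p _ ((c.+1) ^ 2)) => //.
  rewrite coprimeXr // prime_coprime // -addn1 (dvdn_addr 1 pc) dvdn1.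
  by apply: contraTneq (prime_gt1 pp) => ->.
rewrite /cgz.
have e1 : (c%:Z + 1) ^+ 2 * X%:Z = Y%:Z * (n%:Z + 1) * (2 * (2 * c%:Z + 1)).
  by rewrite expr2; nia.
have -> : ((c.+1) ^ 2)%N%:Z = (c%:Z + 1) ^+ 2 by rewrite expr2; nia.
have -> : n.+1%:Z = n%:Z + 1 by lia.
have -> : (c%:Z + 1) ^+ 2 * X%:Z - (c%:Z + 1) ^+ 2 * (2 * (n%:Z + 1) * Y%:Z)
   = - (2 * (n%:Z + 1) * Y%:Z * (c%:Z) ^+ 2).
  rewrite e1; ring.
rewrite dvdzN' expnD PoszM; apply: dvdz_mul.
  by apply: dvdz_mull; rewrite dvdzE.
by rewrite expr2 -PoszM dvdzE /= expnM -mulnn; apply: dvdn_mul.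
Qed.

End Part9.

Section Part10.
Local Open Scope ring_scope.

Lemma PoszX' m n : (m ^ n)%N%:Z = m%:Z ^+ n.
Proof. by rewrite -natz natrX natz. Qed.

Lemma tlem p R N i : prime p -> (p ^ R %| N)%N -> (i <= N)%N ->
  exists t, [/\ (t <= R)%N, (p ^ t %| i)%N, (p ^ t %| N - i)%N,
     (p ^ ((R - t) * 2) %| T N i)%N & (p ^ ((R - t) * 2) %| T (p * N) (p * i))%N].
Proof.
move=> pp hN hiN.
have p0 := prime_gt0 pp.
case hR: (p ^ R %| i)%N.
  exists R; rewrite subnn mul0n expn0 !dvd1n; split => //.
  exact: dvdn_sub.
have i0 : (0 < i)%N by case: (i) hR => //; rewrite dvdn0.
set t := logn p i.
have ht : (p ^ t %| i)%N by apply: pfactor_dvdnn.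
have tR : (t < R)%N.
  rewrite ltnNge; apply/negP => Rt; move/negP: hR; apply.
  by apply: dvdn_trans ht; rewrite dvdn_exp2l.
have htN : (p ^ t %| N)%N by apply: dvdn_trans hN; rewrite dvdn_exp2l // ltnW.
have hnot : ~~ (p ^ t.+1 %| i)%N by rewrite pfactor_dvdn // ltnn.
exists t; split => //; first exact: ltnW.
  exact: dvdn_sub.
  exact: TV.
have -> : ((R - t) * 2 = (R.+1 - t.+1) * 2)%N by rewrite subSS.
apply: TV => //.
- by rewrite expnS dvdn_pmul2l.
- by rewrite expnS dvdn_pmul2l.
- by rewrite leq_mul2l hiN orbT.
Qed.

Lemma TT p R N i : prime p -> odd p -> (p ^ R %| N)%N -> (i <= N)%N ->
  cgz (p ^ (R * 2 + 2)) (T (p * N) (p * i))%:Z (T N i)%:Z.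
Proof.
move=> pp op hN hiN.
have [t [tR hti htb hT1 hT2]] := tlem pp hN hiN.
set b := (N - i)%N in htb *.
have eN : N = (i + b)%N by rewrite /b subnKC.
have HS := Tscale pp hiN; rewrite -/b in HS.
apply: (@cgz_cancel p _ (FF p i ^ 3 * FF p b ^ 3)) => //.
  by rewrite coprimeMr !coprimeXr // FF_coprime.
rewrite /cgz.
have e1 : (T (p * N) (p * i))%:Z * ((FF p i ^ 3 * FF p b ^ 3)%N)%:Z
   = (T N i)%:Z * ((FF p N * FF p (i + i) * FF p (b + b))%N)%:Z by rewrite -!PoszM HS.
rewrite mulrC e1.
have J1 := J pp op hti htb; have J2 := J pp op hti hti; have J3 := J pp op htb htb.
rewrite -eN in J1.
rewrite [_ * (T N i)%:Z]mulrC -mulrBr.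
have -> : (R * 2 + 2 = (R - t) * 2 + t.*2.+2)%N by move: tR; clear; lia.
rewrite expnD (PoszM (p ^ ((R - t) * 2))%N); apply: dvdz_mul; first by rewrite dvdzE.
rewrite !PoszX' !PoszM. rewrite !PoszX' in J1 J2 J3.
set fi := (FF p i)%:Z; set fb := (FF p b)%:Z; set fN := (FF p N)%:Z.
set f2i := (FF p (i + i))%:Z; set f2b := (FF p (b + b))%:Z.
have -> : fN * f2i * f2b - fi ^+ 3 * fb ^+ 3 =
  (fN - fi * fb) * f2i * f2b + fi * fb * (f2i - fi * fi) * f2b
  + fi * fb * fi * fi * (f2b - fb * fb) by ring.
apply: dvdzD'; first apply: dvdzD'.
- by apply: dvdz_mulr; apply: dvdz_mulr; exact: J1.
- by apply: dvdz_mulr; apply: dvdz_mull; exact: J2.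
- by apply: dvdz_mull; exact: J3.
Qed.

End Part10.

Section Part11.
Local Open Scope ring_scope.

Lemma a_case p R N i : prime p -> odd p -> (p ^ R %| N)%N -> (i <= N)%N ->
  cgz (p ^ (R * 2 + 2)) (T (p * N).+1 (p * i))%:Z (2 * (p * N).+1%:Z * (T N i)%:Z).
Proof.
move=> pp op hN hiN.
have [t [tR hti htb hT1 hT2]] := tlem pp hN hiN.
have hpi : (p * i <= p * N)%N by rewrite leq_mul2l hiN orbT.
have H := I1 hpi.
rewrite subSn // -mulnBr in H.
have G := @Gstep p ((R - t) * 2) t.+1 (p * (N - i)) (p * N) (T (p * N).+1 (p * i)) (T (p * N) (p * i)) pp (dvdn_mulr _ (dvdnn p))
  ltac:(by rewrite [LHS]mulnC H) hT2 ltac:(by rewrite expnS dvdn_pmul2l // prime_gt0).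
have E : ((R - t) * 2 + t.+1 * 2 = R * 2 + 2)%N by move: tR; clear; lia.
rewrite E in G.
apply: cgz_trans G _; apply: cgz_mull; exact: TT.
Qed.

Lemma b_case p R N i : prime p -> odd p -> (p ^ R %| N)%N -> (i <= N)%N ->
  cgz (p ^ (R * 2 + 2)) (T (p * N).+1 (p * i).+1)%:Z (2 * (p * N).+1%:Z * (T N i)%:Z).
Proof.
move=> pp op hN hiN.
have [t [tR hti htb hT1 hT2]] := tlem pp hN hiN.
have hpi : (p * i <= p * N)%N by rewrite leq_mul2l hiN orbT.
have H := I2 hpi.
have G := @Gstep p ((R - t) * 2) t.+1 (p * i) (p * N) (T (p * N).+1 (p * i).+1) (T (p * N) (p * i)) pp (dvdn_mulr _ (dvdnn p))
  ltac:(by rewrite [LHS]mulnC H) hT2 ltac:(by rewrite expnS dvdn_pmul2l // prime_gt0).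
have E : ((R - t) * 2 + t.+1 * 2 = R * 2 + 2)%N by move: tR; clear; lia.
rewrite E in G.
apply: cgz_trans G _; apply: cgz_mull; exact: TT.
Qed.

Lemma c_case p R N i j : prime p -> (p ^ R %| N)%N -> (1 < j < p)%N ->
  (p ^ (R * 2 + 2) %| T (p * N).+1 (p * i + j))%N.
Proof.
move=> pp hN /andP[j1 jp].
set k := (p * i + j)%N.
have p1 := prime_gt1 pp.
case: (ltnP (p * N).+1 k) => hk.
  by rewrite /T bin_small // !mul0n dvdn0.
have hk2 : (k <= p * N)%N.
  rewrite leq_eqVlt in hk; case/orP: hk => [/eqP ek|]; last by rewrite ltnS.
  have : (k %% p = (p * N).+1 %% p)%N by rewrite ek.
  rewrite /k mulnC modnMDl -addn1 mulnC modnMDl !modn_small //; lia.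
set d := ((p * N).+1 - k)%N.
have H := I1 hk2; rewrite -/d in H.
have hT : (p ^ (R * 2 + 2) %| T (p * N) k)%N.
  have -> : (R * 2 + 2 = (R.+1 - 0) * 2)%N by lia.
  apply: TV => //; first by rewrite expnS dvdn_pmul2l // prime_gt0.
  rewrite expn1 /k dvdn_addr ?dvdn_mulr //; apply/negbT; apply: gtnNdvd; lia.
have cd : coprime (p ^ (R * 2 + 2)) (d ^ 2).
  rewrite coprimeXl // coprimeXr // prime_coprime //.
  apply/negP => pd.
  have ed : (d + (p * i + j.-1) = p * N)%N by rewrite /d /k; lia.
  have : (p %| d + (p * i + j.-1))%N by rewrite ed dvdn_mulr.
  rewrite (dvdn_addr _ pd) dvdn_addr ?dvdn_mulr //.
  rewrite gtnNdvd //; lia.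
rewrite -(Gauss_dvdl _ cd) H.
by apply: dvdn_mulr; apply: dvdn_mulr.
Qed.

End Part11.

Lemma Sext n M : (n < M)%N -> S n = (\sum_(0 <= k < M) T n k)%N.
Proof.
move=> nM; rewrite /S [RHS](big_cat_nat _ (n := n.+1)) //=.
rewrite [X in _ = (_ + X)%N]big_nat_cond [X in _ = (_ + X)%N]big1 ?addn0 //.
by move=> k /andP[/andP[hk _] _]; rewrite /T bin_small // !mul0n.
Qed.

Lemma block p N (f : nat -> nat) :
  (\sum_(0 <= k < p * N) f k = \sum_(0 <= i < N) \sum_(0 <= j < p) f (p * i + j))%N.
Proof.
elim: N => [|N IH]; first by rewrite muln0 !big_geq.
rewrite big_nat_recr //= -IH mulnS addnC (big_cat_nat _ (n := p * N)) //=; last by rewrite leq_addr.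
congr (_ + _)%N.
rewrite -{1}[p * N]add0n big_addn addKn.
by apply: eq_bigr => j _; rewrite addnC.
Qed.

Section Final.
Local Open Scope ring_scope.

Lemma nat_of_cgz M x y : cgz M x%:Z y%:Z -> (x = y %[mod M])%N.
Proof.
rewrite /cgz -eqz_mod_dvd !modz_nat => /eqP h.
by case: h.
Qed.

Lemma Posz_sum I (r : seq I) (P : pred I) (F : I -> nat) :
  (\sum_(i <- r | P i) F i)%N%:Z = \sum_(i <- r | P i) (F i)%:Z.
Proof. by rewrite -natz natr_sum; apply: eq_bigr => i _; rewrite natz. Qed.

Lemma main p R N : prime p -> odd p -> (p ^ R %| N)%N ->
  cgz (p ^ (R * 2 + 2)) (S (p * N).+1)%:Z ((4 * (p * N).+1 * S N)%N%:Z).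
Proof.
move=> pp op hN.
have p1 := prime_gt1 pp.
rewrite (@Sext _ (p * N.+1)); last by rewrite mulnS; lia.
rewrite block (Posz_sum (index_iota 0 N.+1)) /S big_distrr /= (Posz_sum (index_iota 0 N.+1)).
apply: cgz_sum => i /andP[_ hi]; rewrite ltnS in hi.
rewrite Posz_sum big_ltn ?prime_gt0 // big_ltn //= addn0 addn1.
have -> : (4 * (p * N).+1 * ('C(N, i) * 'C(i.*2, i) * 'C((N - i).*2, N - i)))%N%:Z
  = 2 * (p * N).+1%:Z * (T N i)%:Z + 2 * (p * N).+1%:Z * (T N i)%:Z + 0.
  rewrite /T !PoszM; ring.
rewrite addrA; apply: cgz_add; first apply: cgz_add.
- exact: a_case.
- exact: b_case.
apply: cgz_0; rewrite -Posz_sum dvdzE /= big_nat_cond.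
apply: dvdn_sum => j /andP[/andP[hj1 hj2] _].
by apply: c_case => //; apply/andP.
Qed.

End Final.

Theorem theorem3p2 (p m r : nat) :
  prime p -> odd p -> 0 < m -> 0 < r ->
  S (m * p ^ r).+1 = 4 * (m * p ^ r).+1 * S (m * p ^ r.-1) %[mod p ^ (2 * r)].
Proof.
move=> pp op m0 r0.
have er : r = r.-1.+1 by rewrite prednK.
set R := r.-1 in er *.
have en : m * p ^ r = p * (m * p ^ R) by rewrite er expnS mulnCA.
have e2 : 2 * r = R * 2 + 2 by rewrite er; lia.
rewrite en e2; apply: nat_of_cgz; apply: main => //.
exact: dvdn_mull.
Qed.
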